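(* Let $1\le p_0,p_1\le\infty$, let $\varphi$ be an admissible function, and let $\mu$ be an arbitrary measure on a measure space $\mathcal M$. Then for every $\mu$-measurable function $f$ and every $t>0$, $$ \big(R_{p_0,p_1,\varphi}(f^*_\mu)\big)^{**}(t)=R_{p_0,p_1,\varphi}(f^{**}_\mu)(t). $$
   Context: A function $\varphi:[1,\infty]\to[1,\infty]$ is admissible if $\varphi(1)=1$, $\varphi$ is log-concave on $[1,\infty)$, and there exist $\gamma,\beta>0$ with $\gamma/x\le\varphi'(x)/\varphi(x)\le\beta/x$ for all $x\ge1$. For a $\mu$-measurable $f$, the distribution function is $\lambda^\mu_f(y)=\mu(\{x:|f(x)|>y\})$, the decreasing rearrangement is $f^*_\mu(t)=\inf\{y>0:\lambda^\mu_f(y)\le t\}$, and $f^{**}_\mu(t)=\frac1t\int_0^t f^*_\mu(s)\,ds$, $t>0$. For a measurable function $g$ on $(0,\infty)$ (Lebesgue measure), $g^*$ and $g^{**}(t)=\frac1t\int_0^t g^*(s)\,ds$ are defined in the same way. For a positive measurable function $g$ on $(0,\infty)$ and $t>0$ (with $1/\infty=0$): $P_{p_0,\varphi}g(t)=t^{-1/p_0}\int_0^t\varphi\big(1-\log\frac st\big)g(s)\,\frac{ds}{s^{1-1/p_0}}$, $Q_{p_1}g(t)=t^{-1/p_1}\int_t^\infty g(s)\,\frac{ds}{s^{1-1/p_1}}$, and $R_{p_0,p_1,\varphi}g=P_{p_0,\varphi}g+Q_{p_1}g$. *)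

(* Defs.v *)
From HB Require Import structures.
From mathcomp Require Import all_boot all_order all_algebra.
From mathcomp Require Import all_classical all_reals all_analysis.
Set Implicit Arguments. Unset Strict Implicit. Unset Printing Implicit Defensive.
Import Order.TTheory GRing.Theory Num.Theory.
Import numFieldNormedType.Exports.
Local Open Scope classical_set_scope.
Local Open Scope ring_scope.

(* 1/p for p in [1, +oo], with the convention 1/oo = 0 *)
Definition invp {R : realType} (p : \bar R) : R :=
  match p with EFin r => r^-1 | _ => 0 end.

(* Admissible function phi : [1,oo) -> [1,oo) (phi(oo) is never used below).
   phi' at x = 1 is understood as a right derivative. *)
Definition admissible {R : realType} (phi : R -> R) : Prop :=
  phi 1 = 1 /\
  (forall x, 1 <= x -> 1 <= phi x) /\
  (forall x y l, 1 <= x -> 1 <= y -> 0 <= l <= 1 ->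
     l * ln (phi x) + (1 - l) * ln (phi y) <= ln (phi (l * x + (1 - l) * y))) /\
  exists dphi : R -> R,
    (forall x : R, 1 < x -> is_derive x (1 : R) phi (dphi x)) /\
    ((fun h : R => h^-1 * (phi (1 + h) - phi 1)) @ (0:R)^'+ --> dphi 1) /\
    exists gamma beta : R, 0 < gamma /\ 0 < beta /\
      forall x, 1 <= x -> gamma / x <= dphi x / phi x <= beta / x.

Local Open Scope ereal_scope.

Definition distrib {d} {T : measurableType d} {R : realType}
  (mu : {measure set T -> \bar R}) (D : set T) (h : T -> \bar R) (y : R) : \bar R :=
  mu (D `&` [set x | y%:E < `|h x|]).

(* decreasing rearrangement: inf { y > 0 : distrib y <= t } (inf of empty set = +oo) *)
Definition rearr {d} {T : measurableType d} {R : realType}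
  (mu : {measure set T -> \bar R}) (D : set T) (h : T -> \bar R) (t : R) : \bar R :=
  ereal_inf [set y%:E | y in [set y : R | (0 < y)%R /\ distrib mu D h y <= t%:E]].

Definition avg {R : realType} (gstar : R -> \bar R) (t : R) : \bar R :=
  (t^-1)%:E * \int[lebesgue_measure]_(s in `]0%R, t[) gstar s.

Definition fstar {d} {T : measurableType d} {R : realType}
  (mu : {measure set T -> \bar R}) (f : T -> R) : R -> \bar R :=
  rearr mu setT (EFin \o f).

Definition fstarstar {d} {T : measurableType d} {R : realType}
  (mu : {measure set T -> \bar R}) (f : T -> R) : R -> \bar R :=
  avg (fstar mu f).

Definition gstar {R : realType} (g : R -> \bar R) : R -> \bar R :=
  rearr lebesgue_measure `]0%R, +oo[ g.

Definition gstarstar {R : realType} (g : R -> \bar R) : R -> \bar R :=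
  avg (gstar g).

Definition Pop {R : realType} (p0 : \bar R) (phi : R -> R) (g : R -> \bar R) (t : R)
  : \bar R :=
  (t `^ (- invp p0))%:E *
  \int[lebesgue_measure]_(s in `]0%R, t[)
     ((phi (1 - ln (s / t)) * s `^ (invp p0 - 1))%:E * g s).

Definition Qop {R : realType} (p1 : \bar R) (g : R -> \bar R) (t : R) : \bar R :=
  (t `^ (- invp p1))%:E *
  \int[lebesgue_measure]_(s in `]t, +oo[) ((s `^ (invp p1 - 1))%:E * g s).

Definition Rop {R : realType} (p0 p1 : \bar R) (phi : R -> R) (g : R -> \bar R) (t : R)
  : \bar R :=
  Pop p0 phi g t + Qop p1 g t.

(* Main.v *)
Require Import Defs.
From HB Require Import structures.
From mathcomp Require Import all_boot all_order all_algebra.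
From mathcomp Require Import all_classical all_reals all_analysis.
From mathcomp Require Import measurable_realfun.
From mathcomp Require Import ring lra.
Import Order.TTheory GRing.Theory Num.Theory.
Import numFieldNormedType.Exports.
Local Open Scope classical_set_scope.
Local Open Scope ring_scope.
Local Open Scope ereal_scope.

Section Main.
Local Set Implicit Arguments.
Variable R : realType.
Local Notation mu := (@lebesgue_measure R).
Local Notation mR := (measurableTypeR R).

Definition good (h : R -> \bar R) :=
  (forall s, (0 < s)%R -> 0 <= h s) /\
  (forall s t, (0 < s)%R -> (s <= t)%R -> h t <= h s).

Lemma ni_meas (D : set R) (h : R -> \bar R) : is_interval D ->
  (forall s t, D s -> D t -> (s <= t)%R -> h t <= h s) ->
  measurable_fun (D : set (measurableTypeR R)) h.
Proof.
move=> iD hni.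
apply: (measurability _ (ErealGenCInfty.measurableE R)).
move=> _ [_ [r ->] <-].
apply: is_interval_measurable => x y [Dx /= hx] [Dy /= hy] z /andP[xz zy].
split; first by apply: (iD x y Dx Dy z); rewrite xz zy.
rewrite /= in_itv /= andbT in hy; rewrite /= in_itv /= andbT.
apply: le_trans hy _; apply: hni => //.
by apply: (iD x y Dx Dy z); rewrite xz zy.
Qed.

Lemma good_meas h : good h -> measurable_fun (`]0%R, +oo[ : set (measurableTypeR R)) h.
Proof.
move=> [_ hni]; apply: ni_meas.
  exact: interval_is_interval.
by move=> s t; rewrite /= in_itv /= andbT => s0 _; exact: hni.
Qed.

Lemma good_meas0t h t : good h -> measurable_fun (`]0%R, t[ : set (measurableTypeR R)) h.
Proof.
move=> gh; apply: (measurable_funS _ _ (good_meas gh)) => //.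
by apply: subset_itvl; rewrite bnd_simp.
Qed.

Lemma rearr_ni d (T : measurableType d) (m : {measure set T -> \bar R}) D h s t :
  (s <= t)%R -> rearr m D h t <= rearr m D h s.
Proof.
move=> st; apply: ereal_inf_le_tmp => _ [y [y0 hy] <-].
exists y => //; split => //; apply: le_trans hy _; rewrite lee_fin.
exact: st.
Qed.

Lemma rearr_ge0 d (T : measurableType d) (m : {measure set T -> \bar R}) D h t :
  0 <= rearr m D h t.
Proof.
apply: le_ereal_inf_tmp => _ [y [y0 _] <-]; rewrite lee_fin; exact: ltW.
Qed.

Lemma rearr_good d (T : measurableType d) (m : {measure set T -> \bar R}) D h :
  good (rearr m D h).
Proof.
split=> [s _|s t _ st]; [exact: rearr_ge0|exact: rearr_ni].
Qed.

Lemma rearr_meas d (T : measurableType d) (m : {measure set T -> \bar R}) D h :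
  measurable_fun (setT : set (measurableTypeR R)) (rearr m D h).
Proof.
apply: ni_meas => [x y _ _ z _|s t _ _]; first by [].
exact: rearr_ni.
Qed.

Local Close Scope ereal_scope.
Lemma preim_oc (c a b : R) : (0 < c)%R ->
  (( *%R c) @^-1` `]a, b]%classic) = `]a / c, b / c]%classic :> set R.
Proof.
move=> c0; apply/seteqP; split => x /=; rewrite !in_itv /=.
  by move=> /andP[ax xb]; rewrite ltr_pdivrMr // ler_pdivlMr // ![x * c]mulrC ax xb.
by rewrite ltr_pdivrMr // ler_pdivlMr // ![x * c]mulrC.
Qed.

Local Open Scope ereal_scope.
Lemma push_scale (c : R) (A : set mR) : (0 < c)%R -> measurable A ->
  pushforward mu ( *%R c : mR -> mR) A = (c^-1)%:E * mu A.
Proof.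
move=> c0 mA.
have mm : measurable_fun [set: mR] ( *%R c : mR -> mR) by exact: mulrl_measurable.
pose nu : {measure set mR -> \bar R} := mscale (NngNum (ltW c0))
  (measure_function_pushforward__canonical__measure_function_Measure mu mm).
have := @lebesgue_measure_unique R nu.
have H : forall X, ocitv X -> mu X = nu X.
  move=> _ [[a b] _ <-] /=.
  rewrite /nu /mscale /= /pushforward preim_oc //.
  rewrite !lebesgue_measure_itv /= !lte_fin ltr_pM2r ?invr_gt0 //.
  case: ifPn => ab; last by rewrite mule0.
  by rewrite -!EFinB -EFinM -mulrBl mulrCA mulfV ?gt_eqF // mulr1.
move=> /(_ H A mA) ->.
rewrite /nu /mscale /= muleA -EFinM mulVf ?gt_eqF // mul1e //.
Qed.


Lemma dil (c : R) (D : set mR) (F : R -> \bar R) : (0 < c)%R -> measurable D ->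
  measurable_fun D F -> (forall x, D x -> 0 <= F x) ->
  \int[mu]_(x in ( *%R c) @^-1` D) F (c * x)%R = (c^-1)%:E * \int[mu]_(y in D) F y.
Proof.
move=> c0 mD mF F0.
have mm : measurable_fun [set: mR] ( *%R c : mR -> mR) by exact: mulrl_measurable.
have F0' : {in D, forall y, 0 <= F y} by move=> y /set_mem; exact: F0.
have := ge0_integral_pushforward mm mu mD mF F0'.
rewrite /comp => <-.
have ic0 : (0 < c^-1)%R by rewrite invr_gt0.
rewrite (@eq_measure_integral _ _ _ D (mscale (NngNum (ltW ic0)) mu)
   (measure_function_pushforward__canonical__measure_function_Measure mu mm)).
  by rewrite ge0_integral_mscale.
by move=> A mA _; rewrite /= push_scale.
Qed.

Local Close Scope ereal_scope.
Lemma preim_0t (c t : R) : (0 < c)%R ->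
  (( *%R c) @^-1` `]0, c * t[%classic) = `]0, t[%classic :> set R.
Proof.
move=> c0; apply/seteqP; split => x /=; rewrite !in_itv /=.
  by move=> /andP[ax xb]; rewrite -(pmulr_rgt0 _ c0) ax -(ltr_pM2l c0) xb.
by move=> /andP[ax xb]; rewrite pmulr_rgt0 // ax ltr_pM2l.
Qed.
Lemma preim_ty (c t : R) : (0 < c)%R ->
  (( *%R c) @^-1` `]c * t, +oo[%classic) = `]t, +oo[%classic :> set R.
Proof.
move=> c0; apply/seteqP; split => x /=; rewrite !in_itv /= !andbT.
  by rewrite ltr_pM2l.
by rewrite ltr_pM2l.
Qed.
Local Open Scope ereal_scope.

Lemma dil0 (c t : R) (F : R -> \bar R) : (0 < c)%R ->
  measurable_fun (`]0%R, (c * t)%R[ : set mR) F ->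
  (forall x, (0 < x < c * t)%R -> 0 <= F x) ->
  \int[mu]_(x in `]0%R, t[) F (c * x)%R = (c^-1)%:E * \int[mu]_(y in `]0%R, (c * t)%R[) F y.
Proof.
by move=> c0 mF F0; rewrite -dil // preim_0t.
Qed.

Lemma dily (c t : R) (F : R -> \bar R) : (0 < c)%R ->
  measurable_fun (`](c * t)%R, +oo[ : set mR) F ->
  (forall x, (c * t < x)%R -> 0 <= F x) ->
  \int[mu]_(x in `]t, +oo[) F (c * x)%R = (c^-1)%:E * \int[mu]_(y in `](c * t)%R, +oo[) F y.
Proof.
move=> c0 mF F0; rewrite -dil //; last by move=> x /=; rewrite in_itv /= andbT; exact: F0.
congr (integral _ _ _); apply/seteqP; split => x /=; rewrite !in_itv /= !andbT.
  by rewrite ltr_pM2l.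
by rewrite ltr_pM2l.
Qed.

Lemma good_comp h s (A : set mR) : good h -> (0 < s)%R -> measurable A ->
  A `<=` `]0%R, +oo[%classic -> measurable_fun A (fun x => h (s * x)%R).
Proof.
move=> gh s0 mA sA.
change (measurable_fun A (h \o ( *%R s : mR -> mR))).
apply: (measurable_comp (F := (`]0%R, +oo[%classic : set mR))) => //.
- move=> _ [x Ax <-]; have := sA x Ax; rewrite /= !in_itv /= !andbT => x0.
  exact: mulr_gt0.
- exact: good_meas.
Qed.

Lemma sub01 : (`]0%R, 1%R[%classic : set R) `<=` `]0%R, +oo[%classic.
Proof. by apply: subset_itvl; rewrite bnd_simp. Qed.
Lemma sub1y : (`]1%R, +oo[%classic : set R) `<=` `]0%R, +oo[%classic.
Proof. by apply: subset_itvr; rewrite bnd_simp. Qed.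

Lemma avg_eq h s : good h -> (0 < s)%R ->
  avg h s = \int[mu]_(u in `]0%R, 1%R[) h (s * u)%R.
Proof.
move=> gh s0; rewrite /avg (dil0 s 1%R) // ?mulr1 //.
- by apply: (measurable_funS _ _ (good_meas gh)) => //; apply: subset_itvl; rewrite bnd_simp.
- by move=> x /andP[x0 _]; exact: gh.1.
Qed.

Lemma avg_good h : good h -> good (avg h).
Proof.
move=> gh; split => [s s0|s t s0 st].
  rewrite avg_eq //; apply: integral_ge0 => u /=; rewrite in_itv /= => /andP[u0 _].
  by apply: gh.1; exact: mulr_gt0.
have t0 : (0 < t)%R by apply: lt_le_trans st.
rewrite !avg_eq //; apply: ge0_le_integral => //.
- by move=> u /=; rewrite in_itv /= => /andP[u0 _]; apply: gh.1; exact: mulr_gt0.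
- exact: good_comp sub01.
- exact: good_comp sub01.
- move=> u /=; rewrite in_itv /= => /andP[u0 _]; apply: gh.2; first exact: mulr_gt0.
  by rewrite ler_pM2r.
Qed.

Lemma int0t_dil (t : R) (F : R -> \bar R) : (0 < t)%R ->
  measurable_fun (`]0%R, t[ : set mR) F ->
  (forall x, (0 < x < t)%R -> 0 <= F x) ->
  \int[mu]_(x in `]0%R, t[) F x = t%:E * \int[mu]_(u in `]0%R, 1%R[) F (t * u)%R.
Proof.
move=> t0 mF F0; rewrite (dil0 t 1%R) ?mulr1 //.
by rewrite muleA -EFinM mulfV ?gt_eqF // mul1e.
Qed.

Lemma intty_dil (t : R) (F : R -> \bar R) : (0 < t)%R ->
  measurable_fun (`]t, +oo[ : set mR) F ->
  (forall x, (t < x)%R -> 0 <= F x) ->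
  \int[mu]_(x in `]t, +oo[) F x = t%:E * \int[mu]_(u in `]1%R, +oo[) F (t * u)%R.
Proof.
move=> t0 mF F0; rewrite (dily t 1%R) ?mulr1 //.
by rewrite muleA -EFinM mulfV ?gt_eqF // mul1e.
Qed.

Lemma distrib_meas H (y : R) : good H ->
  measurable (`]0%R, +oo[%classic `&` [set x : mR | y%:E < `|H x|]).
Proof.
move=> gH.
have mA : measurable_fun (`]0%R, +oo[%classic : set mR) (abse \o H).
  apply: measurableT_comp; [exact: abse_measurable | exact: good_meas].
exact: (emeasurable_fun_o_infty (measurable_itv _) mA).
Qed.

Lemma gstar_le H s : good H -> (0 < s)%R -> gstar H s <= H s.
Proof.
move=> gH s0; have [H0 Hni] := gH.
have Hs0 := H0 s s0.
move: Hs0; case Hs: (H s) => [r| |] // Hs0; last by rewrite leey.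
rewrite lee_fin in Hs0.
apply/lee_addgt0Pr => e e0.
rewrite /gstar /rearr; apply: ereal_inf_lbound; exists (r + e)%R => //; split.
  by rewrite ltr_pwDr.
rewrite /distrib.
have sub : (`]0%R, +oo[%classic `&` [set x : mR | (r + e)%:E < `|H x|]) `<=`
    `]0%R, s[%classic.
  move=> x [/= xI hx]; move: (xI); rewrite /= !in_itv /= andbT => x0; rewrite x0 /=.
  rewrite ltNge; apply/negP => sx; have := Hni s x s0 sx; rewrite Hs.
  rewrite gee0_abs in hx; last exact: H0.
  move=> Hxr; have := lt_le_trans hx Hxr; rewrite lte_fin; lra.
apply: (le_trans (le_measure mu _ _ sub)).
- by rewrite inE; exact: distrib_meas.
- by rewrite inE; exact: measurable_itv.
have := lebesgue_measure_itv `]0%R, s[; rewrite /= lte_fin s0 -EFinB subr0 => <-; exact: lexx.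
Qed.

Lemma gstar_ge H s s' : good H -> (0 < s')%R -> (s' < s)%R -> H s <= gstar H s'.
Proof.
move=> gH s'0 s's; have [H0 Hni] := gH; have s0 : (0 < s)%R by exact: lt_trans s's.
apply: le_ereal_inf_tmp => _ [y [y0 hy] <-].
rewrite leNgt; apply/negP => ys.
have sub : `]0%R, s]%classic `<=`
    (`]0%R, +oo[%classic `&` [set x : mR | y%:E < `|H x|]).
  move=> x /=; rewrite !in_itv /= andbT => /andP[x0 xs]; split => //.
  rewrite gee0_abs; last exact: H0.
  exact: lt_le_trans ys (Hni _ _ x0 xs).
have := le_measure mu _ _ sub.
rewrite !inE => /(_ (measurable_itv _) (distrib_meas y gH)) H1.
have L := lebesgue_measure_itv `]0%R, s]; rewrite /= lte_fin s0 -EFinB subr0 in L.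
have : s%:E <= s'%:E by rewrite -L; exact: (le_trans H1 hy).
by rewrite lee_fin leNgt s's.
Qed.

Lemma gstar_int H t : (0 < t)%R -> good H ->
  \int[mu]_(s in `]0%R, t[) gstar H s = \int[mu]_(s in `]0%R, t[) H s.
Proof.
move=> t0 gH; have [H0 Hni] := gH.
have mGT : measurable_fun (setT : set mR) (gstar H) by exact: rearr_meas.
have mG : measurable_fun (`]0%R, t[%classic : set mR) (gstar H).
  exact: (measurable_funS measurableT).
have mH : measurable_fun (`]0%R, t[%classic : set mR) H by exact: good_meas0t.
have G0 : forall x, 0 <= gstar H x by move=> x; exact: rearr_ge0.
apply/eqP; rewrite eq_le; apply/andP; split.
  apply: ge0_le_integral => //.
  by move=> x /=; rewrite in_itv /= => /andP[x0 _]; exact: gstar_le.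
set C := \int[mu]_(s in `]0%R, t[) gstar H s.
have C0 : 0 <= C by apply: integral_ge0 => x _.
have key : forall l : R, (0 < l < 1)%R -> \int[mu]_(s in `]0%R, t[) H s <= (l^-1)%:E * C.
  move=> l /andP[l0 l1].
  apply: (@le_trans _ _ (\int[mu]_(x in `]0%R, t[) gstar H (l * x)%R)).
    apply: ge0_le_integral => //.
    - by move=> x /=; rewrite in_itv /= => /andP[x0 _]; exact: H0.
    - change (measurable_fun (`]0%R, t[%classic : set mR) (gstar H \o ( *%R l : mR -> mR))).
      apply: measurableT_comp => //; exact: mulrl_measurable.
    - move=> x /=; rewrite in_itv /= => /andP[x0 _]; apply: gstar_ge => //.
        exact: mulr_gt0.
      by rewrite gtr_pMl.
  rewrite dil0 //; last by apply: (measurable_funS measurableT).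
  apply: lee_wpmul2l; first by rewrite lee_fin invr_ge0 ltW.
  apply: ge0_subset_integral => //.
  by apply: subset_itvl; rewrite bnd_simp ler_piMl // ltW.
move: C0; case: C key => [c| |] key C0; last by [].
  2: by rewrite leey.
rewrite lee_fin in C0.
apply/lee_addgt0Pr => e e0.
have c1 : (0 < c + 1)%R by lra.
have ce : (0 < c + 1 + e)%R by lra.
have := key ((c + 1) / (c + 1 + e))%R.
rewrite divr_gt0 //= ltr_pdivrMr // mul1r ltrDl e0 => /(_ erefl).
move/le_trans; apply; rewrite -EFinD lee_fin invf_div.
rewrite mulrAC ler_pdivrMr //; nra.
Qed.

Lemma tonelli_rect (A B : set mR) (K : mR * mR -> \bar R) :
  measurable A -> measurable B -> measurable_fun (A `*` B) K ->
  (forall z, (A `*` B) z -> 0 <= K z) ->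
  \int[mu]_(x in A) \int[mu]_(y in B) K (x, y) =
  \int[mu]_(y in B) \int[mu]_(x in A) K (x, y).
Proof.
move=> mA mB mK K0.
pose K' := K \_ (A `*` B).
have mK' : measurable_fun setT K' by exact/(measurable_restrictT _ (measurableX mA mB)).
have K'0 : forall z, 0 <= K' z by exact: erestrict_ge0.
have := fubini_tonelli K' mK' K'0.
have E1 : forall x, \int[mu]_y K' (x, y) = ((fun x => \int[mu]_(y in B) K (x, y)) \_ A) x.
  move=> x; rewrite /patch; case: ifPn => xA.
    rewrite [RHS]integral_mkcond; apply: eq_integral => y _.
    by rewrite /K' /patch in_setX /= xA.
  apply: integral0_eq => y _; rewrite /K' /patch in_setX /=.
  by rewrite (negbTE xA).
have E2 : forall y, \int[mu]_x K' (x, y) = ((fun y => \int[mu]_(x in A) K (x, y)) \_ B) y.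
  move=> y; rewrite /patch; case: ifPn => yB.
    rewrite [RHS]integral_mkcond; apply: eq_integral => x _.
    by rewrite /K' /patch in_setX /= yB andbT.
  apply: integral0_eq => x _; rewrite /K' /patch in_setX /=.
  by rewrite (negbTE yB) andbF.
have F1 : \int[mu]_x \int[mu]_y K' (x, y) =
    \int[mu]_x ((fun x => \int[mu]_(y in B) K (x, y)) \_ A) x.
  by apply: eq_integral => x _; exact: E1.
have F2 : \int[mu]_y \int[mu]_x K' (x, y) =
    \int[mu]_y ((fun y => \int[mu]_(x in A) K (x, y)) \_ B) y.
  by apply: eq_integral => y _; exact: E2.
move=> /(_ mu mu); rewrite F1 F2 -!integral_mkcond; exact.
Qed.

Lemma good_compr h s (A : set mR) : good h -> (0 < s)%R -> measurable A ->
  A `<=` `]0%R, +oo[%classic -> measurable_fun A (fun x => h (x * s)%R).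
Proof.
move=> gh s0 mA sA.
change (measurable_fun A (h \o (fun x : mR => (x * s)%R : mR))).
apply: (measurable_comp (F := (`]0%R, +oo[%classic : set mR))) => //.
- move=> _ [x Ax <-]; have := sA x Ax; rewrite /= !in_itv /= !andbT => x0.
  exact: mulr_gt0.
- exact: good_meas.
- exact: mulrr_measurable.
Qed.

Lemma inner_avg h t u : good h -> (0 < t)%R -> (0 < u)%R ->
  \int[mu]_(s in `]0%R, t[) h (s * u)%R = t%:E * avg h (t * u)%R.
Proof.
move=> gh t0 u0.
have -> : \int[mu]_(s in `]0%R, t[) h (s * u)%R = \int[mu]_(s in `]0%R, t[) h (u * s)%R.
  by apply: eq_integral => x _; rewrite mulrC.
rewrite dil0 //; last 2 first.
- exact: good_meas0t.
- by move=> x /andP[x0 _]; exact: gh.1.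
rewrite /avg [(u * t)%R]mulrC muleA -EFinM.
by rewrite invfM mulrA mulfV ?gt_eqF // mul1r.
Qed.

Lemma tonelli_k (k : R -> R) (B : set mR) h t : measurable B ->
  B `<=` `]0%R, +oo[%classic -> measurable_fun B k ->
  (forall u, B u -> (0 <= k u)%R) -> good h -> (0 < t)%R ->
  \int[mu]_(s in `]0%R, t[) \int[mu]_(u in B) ((k u)%:E * h (s * u)%R) =
  t%:E * \int[mu]_(u in B) ((k u)%:E * avg h (t * u)%R).
Proof.
move=> mB sB mk k0 gh t0.
have MK : measurable_fun ((`]0%R, t[%classic : set mR) `*` B)
    (fun z : mR * mR => (k z.2)%:E * h (z.1 * z.2)%R).
  apply: (@emeasurable_funM _ _ _ _ (fun z : mR * mR => (k z.2)%:E)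
     (fun z : mR * mR => h (z.1 * z.2)%R)).
    apply/measurable_EFinP.
    change (measurable_fun ((`]0%R, t[%classic : set mR) `*` B) (k \o (@snd mR mR))).
    apply: (measurable_comp (F := B)) => //.
    - by move=> _ [[x y] [_ yB] <-].
    - by apply: (measurable_funS measurableT) => //; exact: measurable_snd.
  change (measurable_fun ((`]0%R, t[%classic : set mR) `*` B)
    (h \o (fun z : mR * mR => (z.1 * z.2)%R : mR))).
  apply: (measurable_comp (F := (`]0%R, +oo[%classic : set mR))) => //.
  - move=> _ [[x y] [/= xI yB] <-]; move: xI (sB y yB); rewrite /= !in_itv /= !andbT.
    by move=> /andP[x0 _] y0; exact: mulr_gt0.
  - exact: good_meas.
  - apply: measurable_funM.
      by apply: (measurable_funS measurableT) => //; exact: measurable_fst.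
    by apply: (measurable_funS measurableT) => //; exact: measurable_snd.
have K0 : forall z : mR * mR, ((`]0%R, t[%classic : set mR) `*` B) z ->
    0 <= (k z.2)%:E * h (z.1 * z.2)%R.
  move=> [x y] [/= xI yB]; apply: mule_ge0; first by rewrite lee_fin k0.
  apply: gh.1; move: xI (sB y yB); rewrite /= !in_itv /= !andbT.
  by move=> /andP[x0 _] y0; exact: mulr_gt0.
have TR := tonelli_rect (measurable_itv `]0%R, t[) mB MK K0.
rewrite /= in TR; rewrite TR.
rewrite -ge0_integralZl //; last 3 first.
- apply: (@emeasurable_funM _ _ _ _ (fun x => (k x)%:E) (fun x => avg h (t * x)%R)).
    by apply/measurable_EFinP.
  by apply: good_comp => //; exact: avg_good.
- move=> u uB; apply: mule_ge0; first by rewrite lee_fin k0.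
  by apply: (avg_good gh).1; apply: mulr_gt0 => //; have := sB u uB; rewrite /= in_itv /= andbT.
- by rewrite lee_fin ltW.
apply: eq_integral => u /[1!inE] uB.
have u0 : (0 < u)%R by have := sB u uB; rewrite /= in_itv /= andbT.
rewrite ge0_integralZl //; last 3 first.
- by apply: good_compr => //; apply: subset_itvl; rewrite bnd_simp.
- by move=> x /=; rewrite in_itv /= => /andP[x0 _]; apply: gh.1; exact: mulr_gt0.
- by rewrite lee_fin k0.
by rewrite inner_avg // muleCA.
Qed.

Variables (p0 p1 : \bar R) (phi : R -> R).
Hypothesis phi_ge1 : forall x, (1 <= x)%R -> (1 <= phi x)%R.
Hypothesis phi_cont : forall x, (1 < x)%R -> {for x, continuous phi}.

Local Close Scope ereal_scope.
Definition kern (t s : R) := phi (1 - ln (s / t)) * s `^ (invp p0 - 1).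
Definition kQ (s : R) := s `^ (invp p1 - 1).

Lemma phi_meas : measurable_fun (`]1, +oo[%classic : set mR) phi.
Proof.
apply: open_continuous_measurable_fun; first exact: interval_open.
by move=> x; rewrite inE /= in_itv /= andbT; exact: phi_cont.
Qed.

Lemma kern_arg (t s : R) : 0 < t -> 0 < s < t -> 1 < 1 - ln (s / t).
Proof.
move=> t0 /andP[s0 st]; rewrite ltrDl oppr_gt0.
by apply: ln_lt0; rewrite divr_gt0 //= ltr_pdivrMr // mul1r.
Qed.

Lemma kern_ge0 (t s : R) : 0 < t -> 0 < s < t -> 0 <= kern t s.
Proof.
move=> t0 sI; rewrite /kern mulr_ge0 ?powR_ge0 //.
apply: (le_trans ler01); apply: phi_ge1; apply: ltW; exact: kern_arg.
Qed.

Lemma kern_meas (t : R) : 0 < t -> measurable_fun (`]0, t[%classic : set mR) (kern t).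
Proof.
move=> t0; apply: measurable_funM.
  change (measurable_fun (`]0, t[%classic : set mR) (phi \o (fun s => 1 - ln (s / t)))).
  apply: (measurable_comp (F := (`]1, +oo[%classic : set mR))) => //.
  - move=> _ [x xI <-]; rewrite /= in_itv /= andbT; apply: kern_arg => //.
  - exact: phi_meas.
  - apply: measurable_funB; first exact: measurable_cst.
    apply: measurableT_comp; first exact: measurable_ln.
    exact: mulrr_measurable.
apply: (measurable_funS measurableT) => //; exact: measurable_powR.
Qed.

Lemma pow_id (t a : R) : 0 < t -> t `^ (- a) * t * t `^ (a - 1) = 1.
Proof.
move=> t0; rewrite -{2}(powRr1 (ltW t0)) -powRD; last by rewrite (gt_eqF t0) implybT.
rewrite -powRD; last by rewrite (gt_eqF t0) implybT.
by rewrite (_ : - a + 1 + (a - 1) = 0) ?powRr0 //; lra.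
Qed.

Lemma kQ_meas (A : set mR) : measurable A -> measurable_fun A kQ.
Proof. by move=> mA; apply: (measurable_funS measurableT) => //; exact: measurable_powR. Qed.
Local Open Scope ereal_scope.

Lemma P_dil h t : good h -> (0 < t)%R ->
  Pop p0 phi h t = \int[mu]_(u in `]0%R, 1%R[) ((kern 1%R u)%:E * h (t * u)%R).
Proof.
move=> gh t0; rewrite /Pop int0t_dil //; last 2 first.
- apply: (@emeasurable_funM _ _ _ _ (fun x => (kern t x)%:E) h).
    by apply/measurable_EFinP; exact: kern_meas.
  by apply: (measurable_funS _ _ (good_meas gh)) => //; apply: subset_itvl; rewrite bnd_simp.
- move=> x xI; apply: mule_ge0; first by rewrite lee_fin; have := kern_ge0 t x t0 xI; rewrite /kern.
  by case/andP: xI => x0 _; exact: gh.1.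
have E : \int[mu]_(u in `]0%R, 1%R[)
    ((phi (1 - ln (t * u / t)) * (t * u) `^ (invp p0 - 1))%R%:E * h (t * u)%R) =
    (t `^ (invp p0 - 1))%:E * \int[mu]_(u in `]0%R, 1%R[) ((kern 1%R u)%:E * h (t * u)%R).
  rewrite -ge0_integralZl //; last 3 first.
  - apply: (@emeasurable_funM _ _ _ _ (fun x => (kern 1%R x)%:E) (fun x => h (t * x)%R)).
      by apply/measurable_EFinP; exact: kern_meas.
    exact: good_comp sub01.
  - move=> u /=; rewrite in_itv /= => /andP[u0 u1]; apply: mule_ge0.
      by rewrite lee_fin; apply: kern_ge0 => //; rewrite u0 u1.
    by apply: gh.1; exact: mulr_gt0.
  - by rewrite lee_fin powR_ge0.
  apply: eq_integral => u; rewrite inE /= in_itv /= => /andP[u0 u1].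
  have -> : (t * u / t = u)%R by rewrite [(t * u)%R]mulrC mulfK ?gt_eqF.
  rewrite /kern divr1 powRM ?ltW //.
  by rewrite muleA -EFinM mulrCA.
rewrite E !muleA -!EFinM pow_id //; exact: mul1e.
Qed.

Lemma Q_dil h t : good h -> (0 < t)%R ->
  Qop p1 h t = \int[mu]_(u in `]1%R, +oo[) ((kQ u)%:E * h (t * u)%R).
Proof.
move=> gh t0; rewrite /Qop intty_dil //; last 2 first.
- apply: (@emeasurable_funM _ _ _ _ (fun x => (kQ x)%:E) h).
    by apply/measurable_EFinP; exact: kQ_meas.
  by apply: (measurable_funS _ _ (good_meas gh)) => //; apply: subset_itvr; rewrite bnd_simp ltW.
- move=> x tx; apply: mule_ge0; first by rewrite lee_fin powR_ge0.
  by apply: gh.1; exact: lt_trans tx.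
have E : \int[mu]_(u in `]1%R, +oo[)
    (((t * u) `^ (invp p1 - 1))%R%:E * h (t * u)%R) =
    (t `^ (invp p1 - 1))%:E * \int[mu]_(u in `]1%R, +oo[) ((kQ u)%:E * h (t * u)%R).
  rewrite -ge0_integralZl //; last 3 first.
  - apply: (@emeasurable_funM _ _ _ _ (fun x => (kQ x)%:E) (fun x => h (t * x)%R)).
      by apply/measurable_EFinP; exact: kQ_meas.
    exact: good_comp sub1y.
  - move=> u /=; rewrite in_itv /= andbT => u1; apply: mule_ge0.
      by rewrite lee_fin powR_ge0.
    by apply: gh.1; apply: mulr_gt0 => //; exact: lt_trans u1.
  - by rewrite lee_fin powR_ge0.
  apply: eq_integral => u; rewrite inE /= in_itv /= andbT => u1.
  rewrite /kQ powRM ?ltW //; last exact: lt_trans u1.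
  by rewrite muleA -EFinM.
rewrite E !muleA -!EFinM pow_id //; exact: mul1e.
Qed.

Lemma Pop_good h : good h -> good (Pop p0 phi h).
Proof.
move=> gh; split => [s s0|s t s0 st].
  rewrite P_dil //; apply: integral_ge0 => u /=; rewrite in_itv /= => /andP[u0 u1].
  apply: mule_ge0; first by rewrite lee_fin; apply: kern_ge0 => //; rewrite u0 u1.
  by apply: gh.1; exact: mulr_gt0.
have t0 : (0 < t)%R by apply: lt_le_trans st.
rewrite !P_dil //; apply: ge0_le_integral => //.
- move=> u /=; rewrite in_itv /= => /andP[u0 u1].
  apply: mule_ge0; first by rewrite lee_fin; apply: kern_ge0 => //; rewrite u0 u1.
  by apply: gh.1; exact: mulr_gt0.
- apply: (@emeasurable_funM _ _ _ _ (fun x => (kern 1%R x)%:E) (fun x => h (t * x)%R)).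
    by apply/measurable_EFinP; exact: kern_meas.
  exact: good_comp sub01.
- apply: (@emeasurable_funM _ _ _ _ (fun x => (kern 1%R x)%:E) (fun x => h (s * x)%R)).
    by apply/measurable_EFinP; exact: kern_meas.
  exact: good_comp sub01.
- move=> u /=; rewrite in_itv /= => /andP[u0 u1].
  apply: lee_wpmul2l; first by rewrite lee_fin; apply: kern_ge0 => //; rewrite u0 u1.
  apply: gh.2; first exact: mulr_gt0.
  by rewrite ler_pM2r.
Qed.

Lemma Qop_good h : good h -> good (Qop p1 h).
Proof.
move=> gh; split => [s s0|s t s0 st].
  rewrite Q_dil //; apply: integral_ge0 => u /=; rewrite in_itv /= andbT => u1.
  apply: mule_ge0; first by rewrite lee_fin powR_ge0.
  by apply: gh.1; apply: mulr_gt0 => //; exact: lt_trans u1.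
have t0 : (0 < t)%R by apply: lt_le_trans st.
rewrite !Q_dil //; apply: ge0_le_integral => //.
- move=> u /=; rewrite in_itv /= andbT => u1.
  apply: mule_ge0; first by rewrite lee_fin powR_ge0.
  by apply: gh.1; apply: mulr_gt0 => //; exact: lt_trans u1.
- apply: (@emeasurable_funM _ _ _ _ (fun x => (kQ x)%:E) (fun x => h (t * x)%R)).
    by apply/measurable_EFinP; exact: kQ_meas.
  exact: good_comp sub1y.
- apply: (@emeasurable_funM _ _ _ _ (fun x => (kQ x)%:E) (fun x => h (s * x)%R)).
    by apply/measurable_EFinP; exact: kQ_meas.
  exact: good_comp sub1y.
- move=> u /=; rewrite in_itv /= andbT => u1.
  have u0 : (0 < u)%R by exact: lt_trans u1.
  apply: lee_wpmul2l; first by rewrite lee_fin powR_ge0.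
  apply: gh.2; first exact: mulr_gt0.
  by rewrite ler_pM2r.
Qed.

Lemma Rop_good h : good h -> good (Rop p0 p1 phi h).
Proof.
move=> gh; have [P0 Pm] := Pop_good gh; have [Q0 Qm] := Qop_good gh.
split => [s s0|s t s0 st]; rewrite /Rop; first by rewrite adde_ge0 ?P0 ?Q0.
by apply: leeD; [exact: Pm|exact: Qm].
Qed.

Lemma P_tonelli h t : (0 < t)%R -> good h ->
  \int[mu]_(s in `]0%R, t[) Pop p0 phi h s = t%:E * Pop p0 phi (avg h) t.
Proof.
move=> t0 gh.
transitivity (\int[mu]_(s in `]0%R, t[)
    \int[mu]_(u in `]0%R, 1%R[) ((kern 1%R u)%:E * h (s * u)%R)).
  apply: eq_integral => s; rewrite inE /= in_itv /= => /andP[s0 _]; exact: P_dil.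
rewrite tonelli_k //; last 3 first.
- exact: sub01.
- exact: kern_meas.
- by move=> u uI; apply: kern_ge0 => //; move: uI; rewrite /= in_itv.
by rewrite -P_dil //; exact: avg_good.
Qed.

Lemma Q_tonelli h t : (0 < t)%R -> good h ->
  \int[mu]_(s in `]0%R, t[) Qop p1 h s = t%:E * Qop p1 (avg h) t.
Proof.
move=> t0 gh.
transitivity (\int[mu]_(s in `]0%R, t[)
    \int[mu]_(u in `]1%R, +oo[) ((kQ u)%:E * h (s * u)%R)).
  apply: eq_integral => s; rewrite inE /= in_itv /= => /andP[s0 _]; exact: Q_dil.
rewrite tonelli_k //; last 3 first.
- exact: sub1y.
- exact: kQ_meas.
- by move=> u _; exact: powR_ge0.
by rewrite -Q_dil //; exact: avg_good.
Qed.

Lemma main_eq h t : (0 < t)%R -> good h ->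
  gstarstar (Rop p0 p1 phi h) t = Rop p0 p1 phi (avg h) t.
Proof.
move=> t0 gh.
have gP := Pop_good gh; have gQ := Qop_good gh.
have [Pa _] := Pop_good (avg_good gh); have [Qa _] := Qop_good (avg_good gh).
rewrite /gstarstar {1}/avg gstar_int //; last exact: Rop_good.
rewrite /Rop ge0_integralD //.
- rewrite P_tonelli // Q_tonelli // -ge0_muleDr ?Pa ?Qa //.
  by rewrite muleA -EFinM mulVf ?gt_eqF // mul1e.

- by move=> s /=; rewrite in_itv /= => /andP[s0 _]; apply: gP.1.
- exact: good_meas0t.
- by move=> s /=; rewrite in_itv /= => /andP[s0 _]; apply: gQ.1.
- exact: good_meas0t.
Qed.

End Main.

Theorem mainTheorem2 (R : realType) (p0 p1 : \bar R) (phi : R -> R)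
  (d : measure_display) (T : measurableType d) (mu : {measure set T -> \bar R})
  (f : T -> R) (t : R) :
  1 <= p0 -> 1 <= p1 -> admissible phi ->
  measurable_fun setT f -> (0 < t)%R ->
  gstarstar (Rop p0 p1 phi (fstar mu f)) t = Rop p0 p1 phi (fstarstar mu f) t.
Proof.
move=> _ _ [_ [phige1 [_ [dphi [hder _]]]]] _ t0.
have phic : forall x, (1 < x)%R -> {for x, continuous phi}.
  move=> x x1; have := hder x x1 => hd.
  apply/differentiable_continuous/derivable1_diffP.
  exact: ex_derive.

rewrite /fstarstar /fstar.
apply: (main_eq p0 p1 phige1 phic t t0 (rearr_good mu setT (EFin \o f))).
Qed.
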